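(* The metric space $(\mathcal{J},d_{\mathcal{J}})$ is not locally compact.
   Context: An interval partition is a set $\beta$ of disjoint open subintervals (blocks) of some interval $[0,L]$ that cover $[0,L]$ up to a Lebesgue-null set; write $\|\beta\|:=L$, $\mathrm{Leb}(U)$ for the length of a block $U$, and $\mathcal{I}_H$ for the set of interval partitions. A correspondence between $\beta,\gamma\in\mathcal{I}_H$ is a finite sequence $(U_j,V_j)_{j\in[n]}$, $n\ge0$, of pairs in $\beta\times\gamma$ with $(U_j)_j$, $(V_j)_j$ strictly increasing in left-to-right order. $\mathcal{J}$ is the set of pairs $(\eta,f)$ with $\eta\in\mathcal{I}_H$ and $f\colon[0,\infty]\to[0,\infty)$ right-continuous nondecreasing, constant on every block of $\eta$ and on $[\|\eta\|,\infty]$; $f(U)$ denotes its value on block $U$. $d_{\mathcal{J}}((\eta,f),(\beta,g))$ is the infimum over correspondences $(U_j,V_j)_{j\in[n]}$ between $\eta$ and $\beta$ of the maximum of $\sum_{j}|\mathrm{Leb}(U_j)-\mathrm{Leb}(V_j)|+\|\eta\|-\sum_j\mathrm{Leb}(U_j)$, $\sum_{j}|\mathrm{Leb}(U_j)-\mathrm{Leb}(V_j)|+\|\beta\|-\sum_j\mathrm{Leb}(V_j)$, $\sup_j|f(U_j)-g(V_j)|$ and $|f(\infty)-g(\infty)|$. *)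

(* Defs.v *)
From HB Require Import structures.
From mathcomp Require Import all_boot all_order all_algebra.
From mathcomp Require Import all_classical all_reals.
From mathcomp Require Import all_analysis.

Set Implicit Arguments.
Unset Strict Implicit.
Unset Printing Implicit Defensive.

Import Order.TTheory GRing.Theory Num.Theory numFieldNormedType.Exports.
Local Open Scope classical_set_scope.
Local Open Scope ring_scope.

Section MetricNotions.
Variables (R : realType) (T : Type) (d : T -> T -> R).

Definition dball (x : T) (r : R) : set T := [set y | d x y < r].

Definition dopen (A : set T) : Prop :=
  forall x, A x -> exists2 r : R, 0 < r & dball x r `<=` A.

Definition dcompact (K : set T) : Prop :=
  forall (I : Type) (G : I -> set T),
    (forall i, dopen (G i)) -> K `<=` \bigcup_(i in [set: I]) G i ->
    exists2 F : set I, finite_set F & K `<=` \bigcup_(i in F) G i.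

Definition dlocally_compact : Prop :=
  forall x : T, exists K : set T,
    dcompact K /\ exists2 r : R, 0 < r & dball x r `<=` K.

End MetricNotions.

Section IntervalPartitions.
Variable R : realType.

Definition blockset (U : R * R) : set R := `]U.1, U.2[.

Definition Leb (U : R * R) : R := U.2 - U.1.

Record IH := MkIH {
  ipL : R;
  blocks : set (R * R);
  ipL_ge0 : 0 <= ipL;
  blocks_sub : forall U, blocks U -> 0 <= U.1 /\ U.1 < U.2 /\ U.2 <= ipL;
  blocks_disj : forall U V, blocks U -> blocks V -> U <> V ->
                  blockset U `&` blockset V = set0;
  blocks_cover : (@lebesgue_measure R).-negligible
                   (`[0, ipL] `\` \bigcup_(U in blocks) blockset U)
}.

(* Elements of J: pairs (eta, f).  f : [0,oo] -> [0,oo) is represented by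
   a function R -> R (its values on [0,oo)); its value at oo is f(||eta||),
   since f is constant on [||eta||, oo].  Values on negative reals are
   normalised to f 0 so that the representation is unique. *)
Record J := MkJ {
  jeta : IH;
  jf : R -> R;
  jf_ge0 : forall x, 0 <= x -> 0 <= jf x;
  jf_nondecr : forall x y, 0 <= x -> x <= y -> jf x <= jf y;
  jf_rcont : forall x : R, 0 <= x -> jf z @[z --> x^'+] --> jf x;
  jf_blocks : forall U, blocks jeta U ->
                forall x y, blockset U x -> blockset U y -> jf x = jf y;
  jf_tail : forall x, ipL jeta <= x -> jf x = jf (ipL jeta);
  jf_neg : forall x, x < 0 -> jf x = jf 0
}.

Definition finf (a : J) : R := jf a (ipL (jeta a)).

(* value of f on a block U (f is constant there): taken at the midpoint *)
Definition fblock (a : J) (U : R * R) : R := jf a ((U.1 + U.2) / 2).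

Definition correspondence (beta gamma : IH) (C : seq ((R * R) * (R * R))) : Prop :=
  (forall p, p \in C -> blocks beta p.1 /\ blocks gamma p.2) /\
  sorted (fun p q => p.1.1 < q.1.1) C /\
  sorted (fun p q => p.2.1 < q.2.1) C.

Definition corr_cost (a b : J) (C : seq ((R * R) * (R * R))) : R :=
  let dis := \sum_(p <- C) `|Leb p.1 - Leb p.2| in
  Num.max (Num.max (dis + ipL (jeta a) - \sum_(p <- C) Leb p.1)
                   (dis + ipL (jeta b) - \sum_(p <- C) Leb p.2))
          (Num.max (\big[Num.max/0]_(p <- C) `|fblock a p.1 - fblock b p.2|)
                   `|finf a - finf b|).

Definition dJ (a b : J) : R :=
  inf [set c | exists2 C, correspondence (jeta a) (jeta b) C & c = corr_cost a b C].

End IntervalPartitions.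

(* Main.v *)
Require Import Defs.
From HB Require Import structures.
From mathcomp Require Import all_boot all_order all_algebra.
From mathcomp Require Import all_classical all_reals.
From mathcomp Require Import all_analysis.
From mathcomp Require Import lra.

Set Implicit Arguments.
Unset Strict Implicit.
Unset Printing Implicit Defensive.

Import Order.TTheory GRing.Theory Num.Theory numFieldNormedType.Exports.
Local Open Scope classical_set_scope.
Local Open Scope ring_scope.

Section Aux.
Variable R : realType.
Implicit Types (b : IH R).

Lemma block_sep b U V : blocks b U -> blocks b V -> U <> V ->
  U.2 <= V.1 \/ V.2 <= U.1.
Proof.
move=> bU bV UV.
have [h1 [h2 h3]] := blocks_sub bU.
have [k1 [k2 k3]] := blocks_sub bV.
have := blocks_disj bU bV UV.
case: (leP U.2 V.1) => [|a]; first by left.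
case: (leP V.2 U.1) => [|c]; first by right.
move=> /seteqP [/(_ ((Num.max U.1 V.1 + Num.min U.2 V.2) / 2)) H _].
exfalso; apply: H; rewrite /blockset /=; split; rewrite /= in_itv /=;
  apply/andP; split;
  case: (leP U.1 V.1) => ?; case: (leP U.2 V.2) => ?; lra.
Qed.

Lemma sum_blocks_gen b n : forall (s : seq (R * R)) lo hi, (size s <= n)%N ->
  uniq s -> (forall U, U \in s -> blocks b U /\ lo <= U.1 /\ U.2 <= hi) ->
  lo <= hi -> \sum_(U <- s) Leb U <= hi - lo.
Proof.
elim: n => [|n IHn] [|U s] lo hi //=; rewrite ?big_nil ?subr_ge0 //.
move=> sz /andP[Us us] Hs lohi.
have [bU [loU Uhi]] := Hs U (mem_head _ _).
have [u1 [u2 u3]] := blocks_sub bU.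
rewrite big_cons (bigID (fun V => V.2 <= U.1)) /=.
set sl := seq.filter (fun V => V.2 <= U.1) s.
set sr := seq.filter (fun V => ~~ (V.2 <= U.1)) s.
have HL := IHn sl lo U.1.
have HR := IHn sr U.2 hi.
have sL : (size sl <= n)%N.
  rewrite size_filter; apply: leq_trans (count_size _ _) _; by rewrite -ltnS.
have sR : (size sr <= n)%N.
  rewrite size_filter; apply: leq_trans (count_size _ _) _; by rewrite -ltnS.
have A := HL sL (filter_uniq _ us).
have B := HR sR (filter_uniq _ us).
have : \sum_(i <- sl) Leb i <= U.1 - lo.
  apply: A => // V; rewrite mem_filter => /andP[VU Vs].
  by have [bV [? ?]] := Hs V (ltac:(by rewrite inE Vs orbT)); split.
have : \sum_(i <- sr) Leb i <= hi - U.2.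
  apply: B => // V; rewrite mem_filter => /andP[VU Vs].
  have [bV [? ?]] := Hs V (ltac:(by rewrite inE Vs orbT)); split=> //; split=> //.
  have UV : U <> V by move=> E; move: Us; rewrite E Vs.
  by case: (block_sep bU bV UV) => [//|h]; rewrite h in VU.
rewrite /sl /sr !big_filter; move: (u2) (loU) (Uhi); rewrite /Leb; lra.
Qed.

Lemma sum_blocks b (s : seq (R * R)) : uniq s -> (forall U, U \in s -> blocks b U) ->
  \sum_(U <- s) Leb U <= ipL b.
Proof.
move=> us Hs; rewrite -[ipL b]subr0.
apply: (@sum_blocks_gen b (size s)) => //; last exact: ipL_ge0.
move=> U /Hs bU; have [? [? ?]] := blocks_sub bU; split => //; split => //.
Qed.


Lemma term_le_sum (T : eqType) (s : seq T) (F : T -> R) x :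
  x \in s -> (forall y, 0 <= F y) -> F x <= \sum_(y <- s) F y.
Proof.
move=> + F0; elim: s => //= y s IHs; rewrite inE big_cons => /orP[/eqP->|xs].
  by rewrite lerDl sumr_ge0.
by rewrite (le_trans (IHs xs)) // lerDr.
Qed.

Lemma corr_nil b w : correspondence b w [::].
Proof. by split; [move=> p; rewrite in_nil | split]. Qed.

Lemma corr_uniq1 b w C : correspondence b w C -> uniq (map (fun p => p.1) C).
Proof.
move=> [_ [s1 _]].
apply: (@sorted_uniq _ (fun U V : R * R => U.1 < V.1)).
- by move=> y x z; exact: lt_trans.
- by move=> x; exact: ltxx.
- by rewrite sorted_map.
Qed.

Lemma sum_fst b w C : correspondence b w C ->
  \sum_(p <- C) Leb p.1 <= ipL b.
Proof.
move=> hC; rewrite -(big_map (fun p => p.1) xpredT (@Leb R)).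
apply: sum_blocks; first exact: corr_uniq1 hC.
by move=> U /mapP[p pC ->]; case: hC => /(_ p pC)[].
Qed.

Lemma cost_geA (a c : J R) C :
  \sum_(p <- C) `|Leb p.1 - Leb p.2| + ipL (jeta a) - \sum_(p <- C) Leb p.1
  <= corr_cost a c C.
Proof. by rewrite /corr_cost !le_max lexx. Qed.

Lemma cost_geB (a c : J R) C :
  \sum_(p <- C) `|Leb p.1 - Leb p.2| + ipL (jeta c) - \sum_(p <- C) Leb p.2
  <= corr_cost a c C.
Proof. by rewrite /corr_cost !le_max lexx !orbT. Qed.

Lemma cost_geD (a c : J R) C : `|finf a - finf c| <= corr_cost a c C.
Proof. by rewrite /corr_cost !le_max lexx !orbT. Qed.

Lemma dJ_le (a c : J R) C : correspondence (jeta a) (jeta c) C ->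
  dJ a c <= corr_cost a c C.
Proof.
move=> hC; apply: ge_inf; last by exists C.
exists 0 => _ [C' _ ->]; exact: le_trans (normr_ge0 _) (cost_geD _ _ _).
Qed.

Lemma dJ_lt (a c : J R) r : dJ a c < r ->
  exists2 C, correspondence (jeta a) (jeta c) C & corr_cost a c C < r.
Proof.
move=> h; have [] := inf_lt _ h.
  by exists (corr_cost a c [::]); exists [::] => //; exact: corr_nil.
by move=> _ [C hC ->] hc; exists C.
Qed.

Lemma key_L (a c : J R) C : correspondence (jeta a) (jeta c) C ->
  ipL (jeta c) <= corr_cost a c C + ipL (jeta a).
Proof.
move=> hC; have hB := cost_geB a c C; have hU := sum_fst hC.
have hV : \sum_(p <- C) Leb p.2 <=
   \sum_(p <- C) Leb p.1 + \sum_(p <- C) `|Leb p.1 - Leb p.2|.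
  rewrite -big_split /=; apply: ler_sum => p _.
  rewrite distrC; have := ler_norm (Leb p.2 - Leb p.1); lra.
lra.
Qed.

Lemma key_U (a c : J R) C U : correspondence (jeta a) (jeta c) C ->
  blocks (jeta a) U ->
  (exists V, blocks (jeta c) V /\ Leb U - corr_cost a c C <= Leb V) \/
  Leb U <= corr_cost a c C.
Proof.
move=> hC bU; have hA := cost_geA a c C; have hU := sum_fst hC.
have d0 : 0 <= \sum_(p <- C) `|Leb p.1 - Leb p.2| by apply: sumr_ge0.
case: (boolP (U \in map (fun p => p.1) C)).
  move=> /mapP[p pC ->]; left; exists p.2; split.
    by case: hC => /(_ p pC)[].
  have := term_le_sum (F := fun p => `|Leb p.1 - Leb p.2|) pC (fun _ => normr_ge0 _).
  have := ler_norm (Leb p.1 - Leb p.2); lra.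
move=> nU; right.
have := @sum_blocks (jeta a) (U :: map (fun p => p.1) C).
rewrite big_cons big_map /= nU (corr_uniq1 hC) /=.
have H : (forall U0, U0 \in U :: [seq p.1 | p <- C] -> blocks (jeta a) U0).
  move=> V; rewrite inE => /orP[/eqP->//|/mapP[p pC ->]].
  by case: hC => /(_ p pC)[].
move=> /(_ isT H); lra.
Qed.


Lemma exists_block (b : IH R) : 0 < ipL b -> exists U, blocks b U.
Proof.
move=> L0; case: (pselect (exists U, blocks b U)) => // nex; exfalso.
have E : `[0, ipL b] `\` \bigcup_(U in blocks b) blockset U = `[0, ipL b]%classic.
  apply/seteqP; split => z; first by case.
  by move=> zi; split=> // -[U bU _]; apply nex; exists U.
have := blocks_cover b; rewrite E => hn.
have := @measure_negligible _ _ _ (@lebesgue_measure R) `[0, ipL b]%classic (measurable_itv _) hn.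
move=> H0.
have H1 := lebesgue_measure_itv `[0, ipL b].
have H2 := etrans (esym H0) H1.
move: H2; rewrite /= lte_fin L0 -EFinB subr0 => /eqP; rewrite eqe eq_sym => /eqP L00.
by move: L0; rewrite L00 ltxx.
Qed.

End Aux.

Section Constr.
Variable R : realType.
Variable h : R.
Hypothesis hpos : 0 < h.

Definition mkblocks (N : nat) : set (R * R) :=
  [set U | exists2 k, (k < N)%N & U = (k%:R * h, k.+1%:R * h)].

Lemma mk_sub N U : mkblocks N U -> 0 <= U.1 /\ U.1 < U.2 /\ U.2 <= N%:R * h.
Proof.
move=> [k kN ->] /=; split; first by rewrite mulr_ge0 // ltW.
split; first by rewrite ltr_pM2r // ltr_nat.
by rewrite ler_pM2r // ler_nat.
Qed.

Lemma mk_disj N U V : mkblocks N U -> mkblocks N V -> U <> V ->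
  blockset U `&` blockset V = set0.
Proof.
move=> [k kN ->] [j jN ->] ne; apply/seteqP; split => z //=.
rewrite /blockset /= !in_itv /= => -[/andP[a1 a2] /andP[b1 b2]].
case: (ltngtP k j) => [kj|jk|E].
- have : k.+1%:R * h <= j%:R * h by rewrite ler_pM2r // ler_nat.
  lra.
- have : j.+1%:R * h <= k%:R * h by rewrite ler_pM2r // ler_nat.
  lra.
- by apply: ne; rewrite E.
Qed.

Lemma cover_pts N : forall z, 0 <= z -> z <= N%:R * h ->
  (forall k, (k < N)%N -> ~ (k%:R * h < z < k.+1%:R * h)) ->
  exists2 k, (k <= N)%N & z = k%:R * h.
Proof.
elim: N => [|N IHN] z z0 zN H.
  exists 0%N => //; rewrite mul0r in zN *; apply/eqP; by rewrite eq_le zN z0.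
case: (leP z (N%:R * h)) => zle.
  have [k kN ->] := IHN z z0 zle (fun k kN => H k (leqW kN)).
  by exists k => //; rewrite leqW.
case: (ltP z (N.+1%:R * h)) => zlt.
  by exfalso; apply: (H N (ltnSn N)); rewrite zle zlt.
by exists N.+1 => //; apply/eqP; rewrite eq_le zN zlt.
Qed.

Lemma negl_pts N : (@lebesgue_measure R).-negligible
  [set x | exists2 k, (k <= N)%N & x = k%:R * h].
Proof.
have n1 : forall a : R, (@lebesgue_measure R).-negligible [set a].
  by move=> a; apply/negligibleP; [exact: measurable_set1|exact: lebesgue_measure_set1].
elim: N => [|N IHN].
  apply: (negligibleS _ (n1 (0%:R * h))).
  by move=> x [k]; rewrite leqn0 => /eqP -> ->.
apply: (negligibleS _ (negligibleU IHN (n1 (N.+1%:R * h)))).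
move=> x [k]; rewrite leq_eqVlt => /orP[/eqP -> ->|kN ->]; first by right.
by left; exists k.
Qed.

Lemma mk_cover N : (@lebesgue_measure R).-negligible
  (`[0, N%:R * h] `\` \bigcup_(U in mkblocks N) blockset U).
Proof.
apply: (negligibleS _ (negl_pts N)).
move=> z [/=]; rewrite in_itv /= => /andP[z0 zN] nb.
apply: cover_pts => // k kN /andP[a b]; apply: nb.
exists (k%:R * h, k.+1%:R * h); first by exists k.
by rewrite /blockset /= in_itv /= a b.
Qed.

Definition mkIH (N : nat) : IH R.
Proof.
refine (@MkIH R (N%:R * h) (mkblocks N) _ (@mk_sub N) (@mk_disj N) (mk_cover N)).
by rewrite mulr_ge0 // ltW.
Defined.

End Constr.

Definition mkJ (R : realType) (b : IH R) : J R.
Proof.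
refine (@MkJ R b (fun _ => 0) _ _ _ _ _ _) => //.
by move=> x _; exact: cvg_cst.
Defined.

Theorem lemma3p14 (R : realType) : ~ dlocally_compact (@dJ R).
Proof.
move=> H.
have h1 : (0:R) < 1 by [].
pose x := mkJ (@mkIH R 1 h1 0).
have [K [cK [r r0 sub]]] := H x.
pose e := r / 2.
have e0 : 0 < e by rewrite divr_gt0.
have hp : forall n : nat, 0 < e / n.+1%:R.
  by move=> n; rewrite divr_gt0 // ltr0Sn.
pose y (n : nat) := mkJ (@mkIH R (e / n.+1%:R) (hp n) n.+1).
have yL n : ipL (jeta (y n)) = e.
  by rewrite /= mulrC divfK // pnatr_eq0.
have yb n U : blocks (jeta (y n)) U -> Leb U = e / n.+1%:R.
  by move=> [k _ ->]; rewrite /Leb /= -[k.+1%:R]natr1 mulrDl mul1r addrAC subrr add0r.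
have yball n : dball (@dJ R) x r (y n).
  rewrite /dball /=; apply: le_lt_trans (dJ_le (corr_nil _ _)) _.
  rewrite /corr_cost !big_nil yL /finf /= mul0r subrr normr0 !add0r !subr0.
  rewrite !gt_max; apply/andP; split; apply/andP; split; rewrite /e; lra.
pose G (o : option nat) : set (J R) :=
  match o with
  | None => [set b | ipL (jeta b) < e / 2]
  | Some m => [set b | exists U, blocks (jeta b) U /\ ipL (jeta b) < m%:R * Leb U]
  end.
have Gopen : forall o, dopen (@dJ R) (G o).
  case => [m|] b /=.
  - move=> [U [bU Lb]]; have [u1 [u2 u3]] := blocks_sub bU.
    have l0 : 0 < Leb U by rewrite /Leb subr_gt0.
    have m1 : 0 < m%:R + 1 :> R by rewrite natr1 ltr0Sn.
    have m0 : 0 <= m%:R :> R by [].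
    exists (Num.min (Leb U) ((m%:R * Leb U - ipL (jeta b)) / (m%:R + 1))).
      by rewrite lt_min l0 /= divr_gt0 // subr_gt0.
    move=> w /dJ_lt [C hC]; rewrite lt_min => /andP[c1 c2].
    have hL := key_L hC.
    case: (key_U hC bU) => [[V [bV hV]]|hU]; last by lra.
    exists V; split => //.
    move: c2; rewrite ltr_pdivlMr // => c2.
    have := ler_wpM2l m0 hV.
    lra.
  - move=> Lb; exists (e / 2 - ipL (jeta b)); first by rewrite subr_gt0.
    move=> w /dJ_lt [C hC c1]; have hL := key_L hC; rewrite /=; lra.
have Kcov : K `<=` \bigcup_(i in [set: option nat]) G i.
  move=> b _; case: (ltP (ipL (jeta b)) (e / 2)) => hb; first by exists None.
  have Lpos : 0 < ipL (jeta b) by apply: lt_le_trans hb; rewrite divr_gt0.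
  have [U bU] := exists_block Lpos.
  have [u1 [u2 u3]] := blocks_sub bU.
  have l0 : 0 < Leb U by rewrite /Leb subr_gt0.
  exists (Some (Num.bound (ipL (jeta b) / Leb U))) => //=; exists U; split => //.
  rewrite -ltr_pdivrMr //; apply: archi_boundP.
  by rewrite divr_ge0 // ltW.
have [F Ffin FK] := cK _ G Gopen Kcov.
have [s Fs] := (finite_seqP F).1 Ffin.
pose M := (\max_(o <- s) odflt 0 o)%N.
have yK := sub _ (yball M).
have [i Fi Gi] := FK _ yK.
rewrite Fs /= in Fi.
case: i Fi Gi => [m|] Fi.
- move=> [U [bU hU]]; rewrite yL (yb _ _ bU) in hU.
  have mM : (m <= M)%N := @leq_bigmax_seq _ s xpredT (fun o => odflt 0%N o) (Some m) Fi isT.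
  have mM' : m%:R <= M%:R :> R by rewrite ler_nat.
  have q := hp M.
  have := ler_wpM2r (ltW q) mM'.
  have : M.+1%:R * (e / M.+1%:R) = e by rewrite mulrC divfK // pnatr_eq0.
  move: q hU; set t := e / M.+1%:R; rewrite -natr1; lra.
- move=> /=; move: (yL M) => /= ->; lra.
Qed.
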